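(* Let $k,m$ be positive integers, $n=km$, $f:\mathbb{N}\to\mathbb{N}$ monotonically decreasing (nonincreasing), and $T_1,\dots,T_n\in\{H,L\}$ with $0\le H<L$. Let $\mathbf{x}$ be the decision sequence output by Algorithm 1 on input capacities $m_1=\dots=m_k=m$ and task sequence $T_1,\dots,T_n$. Then $\mathbf{x}$ assigns exactly $m$ tasks to each agent, and its total cost $\sum_{t=1}^n f(p_t)\,T_t$ is minimum among all size-$m$ $k$-allocation schemes of the $n$ tasks (equivalently, among all decision sequences assigning exactly $m$ tasks to each agent).
   Context: Positional allocation problem: given $n=km$ tasks with intrinsic costs $T_1,\dots,T_n$ and $k$ agents, a decision sequence $\mathbf{x}=(x_1,\dots,x_n)\in[k]^n$ assigns task $t$ to agent $x_t$, with each agent receiving exactly $m$ tasks; tasks assigned to the same agent are processed in increasing index order, and the position of task $t$ is $p_t=|\{s\le t: x_s=x_t\}|$. Its total cost is $\sum_{t=1}^n f(p_t)T_t$ (equivalently, $\sum_{r=1}^k\sum_{p=1}^m f(p)\,T_{r,p}$ where $T_{r,p}$ is the cost of the $p$-th task of agent $r$). Algorithm 1 (simulation-based threshold algorithm). Input: integers $0\le m_1\le\dots\le m_k$ and a sequence $T_1,\dots,T_n$ with $n=\sum_r m_r$. Set $q^{(1)}_r=m_r$ for all $r$. For $t=1,\dots,n$: set $x_t=\mathrm{TA}(q^{(t)}_1,\dots,q^{(t)}_k;\,T_t,T_{t+1},\dots,T_n)$ and $q^{(t+1)}_r=q^{(t)}_r-\mathbf{1}(x_t=r)$ for each $r$.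 Output $\mathbf{x}=(x_1,\dots,x_n)$. Subroutine $\mathrm{TA}(m_1,\dots,m_k;\,S_1,\dots,S_N)$ (ThresholdAllocation), with the convention $m_0:=0$: for $\gamma=k,k-1,\dots,1$: if $m_\gamma=m_{\gamma-1}$, go to the next $\gamma$; otherwise, for $h=\gamma,\gamma+1,\dots,k$: let $Z_L=\sum_{i=1}^{h-1}\min\{m_i,m_{\gamma-1}\}$ and $Z_H=\sum_{i=\gamma}^{h}(m_i-m_{\gamma-1})$; if $|\{i\in\{1,\dots,Z_L+Z_H\}: S_i>S_1\}|\ge Z_L$, return $\gamma$ (agent to which $S_1$ is assigned). *)

(* Defs.v *)
From HB Require Import structures.
From mathcomp Require Import all_boot all_order all_algebra.
Set Implicit Arguments. Unset Strict Implicit. Unset Printing Implicit Defensive.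
Import Order.TTheory GRing.Theory Num.Theory.

(* Agents are numbered 1..k; capacities ms = [:: m_1; ...; m_k] (1-indexed
   access, with the convention m_0 = 0). *)
Definition mget (ms : seq nat) (i : nat) : nat :=
  if i is i'.+1 then nth 0 ms i' else 0.

Section Alg.
Variable R : realDomainType.
Local Open Scope ring_scope.

Definition sget (S : seq R) (i : nat) : R := nth 0 S i.-1.

Definition cnt_greater (S : seq R) (z : nat) : nat :=
  count (fun i => sget S 1 < sget S i) (iota 1 z).

Definition ZL (ms : seq nat) (g h : nat) : nat :=
  (\sum_(1 <= i < h) minn (mget ms i) (mget ms g.-1))%N.

Definition ZH (ms : seq nat) (g h : nat) : nat :=
  (\sum_(g <= i < h.+1) (mget ms i - mget ms g.-1))%N.

Definition TA_test (ms : seq nat) (S : seq R) (g h : nat) : bool :=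
  (ZL ms g h <= cnt_greater S (ZL ms g h + ZH ms g h))%N.

Definition TA_gamma_ok (ms : seq nat) (S : seq R) (g : nat) : bool :=
  (mget ms g != mget ms g.-1) && has (TA_test ms S g) (iota g (size ms - g).+1).

(* ThresholdAllocation: first gamma, scanning k, k-1, ..., 1, that returns;
   0 (no agent) if none does. *)
Definition TA (ms : seq nat) (S : seq R) : nat :=
  head 0%N [seq g <- rev (iota 1 (size ms)) | TA_gamma_ok ms S g].

Definition decr (q : seq nat) (g : nat) : seq nat :=
  [seq (if i.+1 == g then (nth 0 q i).-1 else nth 0 q i) | i <- iota 0 (size q)].

(* Algorithm 1: at step t, the remaining sequence is T_t, ..., T_n. *)
Fixpoint alg1_aux (q : seq nat) (S : seq R) : seq nat :=
  match S with
  | [::] => [::]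
  | _ :: S' => let g := TA q S in g :: alg1_aux (decr q g) S'
  end.

Definition algorithm1 (ms : seq nat) (T : seq R) : seq nat := alg1_aux ms T.

(* position p_t of the task with 0-based index t: |{s <= t : x_s = x_t}| *)
Definition position (x : seq nat) (t : nat) : nat :=
  count (pred1 (nth 0 x t)) (take t.+1 x).

Definition total_cost (f : nat -> nat) (T : seq R) (x : seq nat) : R :=
  \sum_(0 <= t < size T) (f (position x t))%:R * nth 0 T t.

End Alg.

Definition valid_scheme (k m n : nat) (x : seq nat) : bool :=
  [&& size x == n, all (fun r => (1 <= r <= k)%N) x
    & all (fun r => count_mem r x == m) (iota 1 k)].

(* Main.v *)
Require Import Defs.
From HB Require Import structures.
From mathcomp Require Import all_boot all_order all_algebra.
From mathcomp Require Import zify.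
Set Implicit Arguments. Unset Strict Implicit. Unset Printing Implicit Defensive.

Lemma nth_decr q g i : nth 0 (decr q g) i = nth 0 q i - (i.+1 == g).
Proof.
rewrite /decr; case: (ltnP i (size q)) => Hi.
  rewrite (nth_map 0) ?size_iota // nth_iota // add0n.
  by case: (i.+1 == g); rewrite ?subn0 ?subn1.
rewrite !nth_default ?size_map ?size_iota //.
Qed.

Lemma size_decr q g : size (decr q g) = size q.
Proof. by rewrite /decr size_map size_iota. Qed.

Lemma sum_le (F G : nat -> nat) k :
  (forall i, i < k -> F i <= G i) -> \sum_(0 <= i < k) F i <= \sum_(0 <= i < k) G i.
Proof.
move=> h; rewrite big_nat_cond [X in _ <= X]big_nat_cond.
by apply: leq_sum => i /andP[/andP[_ hi] _]; apply: h.
Qed.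

Lemma sum_ind (w : nat -> nat) k r : r < k ->
  \sum_(0 <= i < k) ((i == r) * w i) = w r.
Proof.
move=> hr; rewrite (@big_cat_nat _ _ _ r) ?(ltnW hr) //=.
rewrite big_nat_cond big1; last first.
  by move=> i /andP[/andP[_ hi] _]; rewrite (ltn_eqF hi).
rewrite add0n big_ltn // eqxx mul1n big_nat_cond big1 ?addn0 //.
by move=> i /andP[/andP[hi _] _]; rewrite (gtn_eqF hi).
Qed.

Section F.
Variables (k c : nat).

Definition wa (q : seq nat) i := nth 0 q i - c.
Definition wb (q : seq nat) i := minn (nth 0 q i) c.
Definition sA q (P : nat -> bool) := \sum_(0 <= i < k) (P i * wa q i).
Definition sB q (P : nat -> bool) := \sum_(0 <= i < k) (P i * wb q i).
Definition G q s P := minn (s - sA q P) (sB q P).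
Definition jn (J : {set 'I_k}) (i : nat) : bool :=
  if insub i is Some x then x \in J else false.
Definition F q s := \max_(J : {set 'I_k}) G q s (jn J).

Lemma F_ge q s P : G q s P <= F q s.
Proof.
pose J := [set x : 'I_k | P x].
have -> : G q s P = G q s (jn J).
  have e : forall w, \sum_(0 <= i < k) (P i * w i) = \sum_(0 <= i < k) (jn J i * w i).
    move=> w; apply: eq_big_nat => i /andP[_ hi].
    by rewrite /jn insubT /= inE.
  by rewrite /G /sA /sB !e.
exact: (leq_bigmax J).
Qed.

Lemma F_att q s : exists P, F q s = G q s P.
Proof.
by exists (jn [arg max_(J > set0) G q s (jn J)]); rewrite /F (bigmax_eq_arg set0).
Qed.

End F.
Section FL.
Variables (k c : nat) (q : seq nat).
Local Notation qq i := (nth 0 q i).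

Lemma nth_decrS r i : nth 0 (decr q r.+1) i = qq i - (i == r).
Proof. by rewrite nth_decr eqSS. Qed.

Lemma sumD (f g : nat -> nat) :
  \sum_(0 <= i < k) (f i + g i) = \sum_(0 <= i < k) f i + \sum_(0 <= i < k) g i.
Proof. by rewrite big_split. Qed.

Lemma sum_eq_le1 r : \sum_(0 <= i < k) ((i == r) : nat) <= 1.
Proof.
case: (ltnP r k) => hr.
  by rewrite -(sum_ind (fun _ => 1) hr) leq_eqVlt; apply/orP; left;
     apply/eqP; apply: eq_big_nat => i _; rewrite muln1.
rewrite big_nat_cond big1 // => i /andP[/andP[_ hi] _].
by rewrite (ltn_eqF (leq_trans hi hr)).
Qed.

Lemma FC r s : F k c q s.+1 <= (F k c (decr q r.+1) s).+1.
Proof.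
have [P ->] := F_att k c q s.+1.
set qd := decr q r.+1.
have hA : sA k c qd P <= sA k c q P.
  apply: sum_le => i _; rewrite /wa nth_decrS; apply: leq_mul => //; lia.
have hB : sB k c q P <= sB k c qd P + 1.
  apply: (leq_trans _ (leq_add (leqnn _) (sum_eq_le1 r))).
  rewrite -sumD; apply: sum_le => i _; rewrite /wb nth_decrS.
  case: (P i); case: (i == r) => /=; lia.
have := F_ge k c qd s P; rewrite /G; lia.
Qed.

Lemma FA r s : r < k -> 0 < qq r ->
  (qq r <= c) + F k c (decr q r.+1) s <= F k c q s.+1.
Proof.
move=> hr hq.
have [P ->] := F_att k c (decr q r.+1) s.
set qd := decr q r.+1.
case: (leqP (qq r) c) => hc /=.
- pose P2 i := (i == r) || P i.
  have hA : sA k c q P2 <= sA k c qd P.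
    apply: sum_le => i _; rewrite /wa /P2 nth_decrS.
    case: (i =P r) => [->|ne] /=; first by lia.
    by rewrite subn0.
  have hB : sB k c qd P + 1 <= sB k c q P2.
    rewrite -[X in _ + X <= _](sum_ind (fun _ => 1) hr) -sumD; apply: sum_le => i _.
    rewrite /wb /P2 nth_decrS.
    case: (i =P r) => [->|ne] /=; first by case: (P r) => /=; lia.
    by rewrite subn0 addn0.
  have h1 : 1 <= F k c q s.+1.
    apply: leq_trans (F_ge k c q s.+1 (pred1 r)).
    rewrite /G.
    have -> : sA k c q (pred1 r) = 0.
      rewrite /sA big_nat_cond big1 // => i _ /=; rewrite /wa.
      by case: (i =P r) => [->|] /=; lia.
    have -> : sB k c q (pred1 r) = wb c q r by rewrite /sB (sum_ind (wb c q)).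
    rewrite /wb; lia.
  have := F_ge k c q s.+1 P2; rewrite /G; lia.
- have hA : sA k c q P <= sA k c qd P + 1.
    apply: (leq_trans _ (leq_add (leqnn _) (sum_eq_le1 r))).
    rewrite -sumD; apply: sum_le => i _; rewrite /wa nth_decrS.
    case: (P i); case: (i == r) => /=; lia.
  have hB : sB k c qd P <= sB k c q P.
    apply: sum_le => i _; rewrite /wb nth_decrS; apply: leq_mul => //; lia.
  have := F_ge k c q s.+1 P; rewrite /G; lia.
Qed.

Lemma FS g0 s (P : nat -> bool) : g0 < k -> c < qq g0 ->
  (forall i, g0 <= i < k -> qq g0 <= qq i) ->
  (exists2 i, g0 <= i < k & P i) ->
  G k c q s.+1 P <= F k c (decr q g0.+1) s.
Proof.
move=> hg hc hmon [i /andP[hgi hik] hPi].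
set qd := decr q g0.+1.
case hPg: (P g0).
- have hA : sA k c qd P + 1 <= sA k c q P.
    rewrite -[X in _ + X <= _](sum_ind (fun _ => 1) hg) -sumD; apply: sum_le => x _.
    rewrite /wa nth_decrS; case: (x =P g0) => [->|ne] /=.
      by rewrite hPg /=; lia.
    by rewrite subn0 addn0.
  have hB : sB k c q P <= sB k c qd P.
    apply: sum_le => x _; rewrite /wb nth_decrS.
    case: (x =P g0) => [->|ne] /=; last by rewrite subn0.
    by apply: leq_mul => //; lia.
  have := F_ge k c qd s P; rewrite /G; lia.
- have ne : i != g0 by apply/eqP => e; move: hPi; rewrite e hPg.
  pose P' x := (x == g0) || (P x && (x != i)).
  have hmi : qq g0 <= qq i by apply: hmon; rewrite hgi hik.
  have hA : sA k c qd P' + wa c q i + 1 <= sA k c q P + wa c q g0.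
    rewrite -(sum_ind (wa c q) hik) -(sum_ind (fun _ => 1) hg) -(sum_ind (wa c q) hg).
    rewrite -!sumD; apply: sum_le => x _.
    rewrite /P' /wa nth_decrS; case: (x =P g0) => [->|nx] /=.
      by rewrite eq_sym (negbTE ne) hPg /=; lia.
    case: (x =P i) => [->|nxi] /=; first by rewrite hPi /=; lia.
    by rewrite subn0 andbT; lia.
  have hB : sB k c q P + wb c q g0 <= sB k c qd P' + wb c q i.
    rewrite -(sum_ind (wb c q) hik) -(sum_ind (wb c q) hg) -!sumD; apply: sum_le => x _.
    rewrite /P' /wb nth_decrS; case: (x =P g0) => [->|nx] /=.
      by rewrite eq_sym (negbTE ne) hPg /=; lia.
    case: (x =P i) => [->|nxi] /=; first by rewrite hPi /=; lia.
    by rewrite subn0 andbT; lia.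
  have hwa : wa c q g0 <= wa c q i by rewrite /wa; lia.
  have hwb : wb c q i = wb c q g0 by rewrite /wb; lia.
  have := F_ge k c qd s P'; rewrite /G; lia.
Qed.
End FL.
Section V.
Variables (T : eqType) (Lv : T) (k c : nat).

Definition Lc (S : seq T) s := count (pred1 Lv) (take s S).
Definition V q (S : seq T) := \max_(s < (size S).+1) (Lc S s - F k c q s).

Lemma Lc_cons x S s : Lc (x :: S) s.+1 = (x == Lv) + Lc S s.
Proof. by []. Qed.

Lemma Lc_le S s : Lc S s <= s.
Proof. by rewrite /Lc (leq_trans (count_size _ _)) // size_take; case: ltnP => // /ltnW. Qed.

Lemma Lc_mono S s t : s <= t -> Lc S s <= Lc S t.
Proof.
move=> h; rewrite /Lc -(subnKC h) takeD count_cat leq_addr //.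
Qed.

Lemma Lc_lip S s t : s <= t -> Lc S t <= Lc S s + (t - s).
Proof.
move=> h; rewrite /Lc -{1}(subnKC h) takeD count_cat leq_add2l.
by rewrite (leq_trans (count_size _ _)) // size_take; case: ltnP => // /ltnW.
Qed.

Lemma V_ge q S s : s <= size S -> Lc S s - F k c q s <= V q S.
Proof. by move=> h; rewrite /V (bigmax_sup (Ordinal (n:=(size S).+1) h)). Qed.

Lemma V_le q S b : (forall s, s <= size S -> Lc S s - F k c q s <= b) -> V q S <= b.
Proof. by move=> h; apply/bigmax_leqP => i _; apply: h; rewrite -ltnS. Qed.

Lemma F0 q : F k c q 0 = 0.
Proof. by apply/eqP; rewrite -leqn0; apply/bigmax_leqP => J _; rewrite /G sub0n min0n. Qed.

Lemma V_nil q : V q [::] = 0.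
Proof. by apply/eqP; rewrite -leqn0; apply: V_le => s /=; rewrite leqn0 => /eqP ->; rewrite /Lc take0. Qed.

Lemma VA q r x S : r < k -> 0 < nth 0 q r ->
  V q (x :: S) <= ((x == Lv) && (c < nth 0 q r)) + V (decr q r.+1) S.
Proof.
move=> hr hq; apply: V_le => -[_|s] /=; first by rewrite /Lc take0.
rewrite ltnS Lc_cons => hs.
have h1 := FA c s hr hq; have h2 := V_ge (decr q r.+1) hs.
case: (x == Lv); case: (leqP (nth 0 q r) c) => hc /=; lia.
Qed.

Lemma VBL1 q r S : V (decr q r.+1) S <= V q (Lv :: S).
Proof.
apply: V_le => s hs; have h1 := FC k c q r s.
have h2 : s.+1 <= size (Lv :: S) by [].
have := V_ge q h2; rewrite Lc_cons eqxx; lia.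
Qed.

Lemma VBL2 q r S : (forall s, F k c q s.+1 <= F k c (decr q r.+1) s) ->
  (V (decr q r.+1) S).+1 <= V q (Lv :: S).
Proof.
move=> hF.
have h1 : 1 <= V q (Lv :: S).
  have := V_ge q (isT : 1 <= size (Lv :: S)); rewrite Lc_cons eqxx /Lc take0 /=.
  by have := hF 0; rewrite F0; lia.
have [[s hs] /= ->] : exists s : 'I_(size S).+1, V (decr q r.+1) S = Lc S s - F k c (decr q r.+1) s.
  by exists [arg max_(i > ord0) (Lc S i - F k c (decr q r.+1) i)]; rewrite /V (bigmax_eq_arg ord0).
have h2 : s.+1 <= size (Lv :: S) by [].
have := V_ge q h2; rewrite Lc_cons eqxx; have := hF s; lia.
Qed.

Lemma HB2 q g0 x S s (As : nat) : g0 < k -> c < nth 0 q g0 ->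
  (forall i, g0 <= i < k -> nth 0 q g0 <= nth 0 q i) ->
  x != Lv -> \sum_(0 <= i < g0) wa c q i <= As ->
  Lc S s - F k c (decr q g0.+1) s <= maxn (Lc (x :: S) s.+1 - F k c q s.+1) As.
Proof.
move=> hg hc hmon hx hAs; rewrite Lc_cons (negbTE hx) add0n.
have [P hP] := F_att k c q s.+1.
case: (boolP [exists i : 'I_k, (g0 <= i) && P i]) => [/existsP[i /andP[h1 h2]]|hn].
  have hi : g0 <= i < k by rewrite h1 ltn_ord.
  have := FS s hg hc hmon (ex_intro2 _ _ (nat_of_ord i) hi h2).
  rewrite -hP; lia.
have hno : forall i, g0 <= i < k -> P i = false.
  move=> i /andP[h1 h2]; apply/negP => hp; move/existsP: hn; apply.
  by exists (Ordinal h2); rewrite /= h1 hp.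
set qd := decr q g0.+1.
have eA : sA k c qd P = sA k c q P.
  apply: eq_big_nat => i /andP[_ hi]; rewrite /wa nth_decrS.
  case: (i =P g0) => [->|]; first by rewrite hno ?hg ?leqnn.
  by rewrite subn0.
have eB : sB k c qd P = sB k c q P.
  apply: eq_big_nat => i /andP[_ hi]; rewrite /wb nth_decrS.
  case: (i =P g0) => [->|]; first by rewrite hno ?hg ?leqnn.
  by rewrite subn0.
have hA : sA k c q P <= \sum_(0 <= i < g0) wa c q i.
  rewrite /sA (@big_cat_nat _ _ _ g0) //=; last exact: ltnW.
  have -> : \sum_(g0 <= i < k) P i * wa c q i = 0.
    by rewrite big_nat_cond big1 // => i /andP[hi _]; rewrite hno.
  rewrite addn0; by apply: sum_le => i _; case: (P i); rewrite ?mul1n ?mul0n.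
have := F_ge k c qd s P; rewrite /G eA eB; rewrite hP /G.
have := Lc_le S s; lia.
Qed.

End V.
Lemma sum_split m t n (w : nat -> nat) : m <= t <= n ->
  \sum_(m <= i < n) w i = \sum_(m <= i < t) w i + \sum_(t <= i < n) w i.
Proof. by case/andP=> h1 h2; rewrite (@big_cat_nat _ _ _ t). Qed.

Lemma sum_cut m t n (w : nat -> nat) : m <= t <= n ->
  \sum_(m <= i < n) ((i < t) * w i) = \sum_(m <= i < t) w i.
Proof.
move=> h; rewrite (sum_split _ h).
have -> : \sum_(t <= i < n) ((i < t) * w i) = 0.
  by rewrite big_nat_cond big1 // => i /andP[/andP[hi _] _]; rewrite ltnNge hi.
by rewrite addn0; apply: eq_big_nat => i /andP[_ ->]; rewrite mul1n.
Qed.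

Lemma sum_eq_in m n (w1 w2 : nat -> nat) : (forall i, m <= i < n -> w1 i = w2 i) ->
  \sum_(m <= i < n) w1 i = \sum_(m <= i < n) w2 i.
Proof. exact: eq_big_nat. Qed.

Lemma sum_le_in m n (w1 w2 : nat -> nat) : (forall i, m <= i < n -> w1 i <= w2 i) ->
  \sum_(m <= i < n) w1 i <= \sum_(m <= i < n) w2 i.
Proof.
move=> h; rewrite big_nat_cond [X in _ <= X]big_nat_cond.
by apply: leq_sum => i /andP[hi _]; apply: h.
Qed.

Section H.
Variables (T : eqType) (Lv : T) (k c : nat).

Lemma F_prefix q s t : t <= k ->
  minn (s - \sum_(0 <= i < t) wa c q i) (\sum_(0 <= i < t) wb c q i) <= F k c q s.
Proof.
move=> ht; have := F_ge k c q s (fun i => i < t).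
by rewrite /G /sA /sB !sum_cut ?ht.
Qed.

Lemma Hi q (S : seq T) p : 0 < p <= k -> (forall i, i < p -> nth 0 q i <= c) ->
  \sum_(0 <= i < k) nth 0 q i = size S -> (forall s, 0 < s -> Lc Lv S s < s) ->
  (forall t, p < t <= k ->
     Lc Lv S (\sum_(0 <= i < t.-1) minn (nth 0 q i) (nth 0 q p.-1)
              + \sum_(p <= i < t) (nth 0 q i - nth 0 q p.-1))
     < \sum_(0 <= i < t.-1) minn (nth 0 q i) (nth 0 q p.-1)) ->
  forall s, 0 < s <= size S -> Lc Lv S s < F k c q s.
Proof.
move=> /andP[p0 pk] hlow hsum hLs hfail s /andP[s0 sS].
set v := nth 0 q p.-1.
have hv : v <= c by apply: hlow; rewrite prednK.
pose ZL t := \sum_(0 <= i < t.-1) minn (nth 0 q i) v.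
pose ZH t := \sum_(p <= i < t) (nth 0 q i - v).
pose Q t := (p <= t <= k) && ((t == p) || (ZL t + ZH t < s)).
have exQ : exists t, Q t by exists p; rewrite /Q leqnn pk eqxx.
have ubQ : forall t, Q t -> t <= k by move=> t /andP[/andP[_ ->]].
case: (ex_maxnP exQ ubQ) => t /andP[/andP[hpt htk] hor] hmax.
have hF := F_prefix q s htk.
set aP := \sum_(0 <= i < t) wa c q i in hF.
set bP := \sum_(0 <= i < t) wb c q i in hF.
have hap : \sum_(0 <= i < p) wa c q i = 0.
  by rewrite big_nat_cond big1 // => i /andP[/andP[_ hi] _]; rewrite /wa; apply/eqP; rewrite subn_eq0 hlow.
have h1 : Lc Lv S s < s - aP.
  case: (eqVneq t p) => [et|ne].
    by rewrite /aP et hap subn0; apply: hLs.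
  move: hor; rewrite (negbTE ne) /= => hW.
  have hA : aP <= ZH t.
    rewrite /aP (@sum_split 0 p t) ?hpt // hap add0n.
    by apply: sum_le_in => i _; rewrite /wa; lia.
  have hpt' : p < t by rewrite ltn_neqAle eq_sym ne hpt.
  have := hfail t (ltac:(by rewrite hpt' htk)).
  have := Lc_lip Lv S (ltnW hW); rewrite -/(ZL t) -/(ZH t); lia.
have h2 : Lc Lv S s < bP.
  case: (ltnP t k) => htk'.
    have hQ : ~~ Q t.+1 by apply/negP => /hmax; rewrite ltnn.
    move: hQ; rewrite /Q (leq_trans hpt) // htk' /= eqn_leq (leqNgt t.+1 p) ltnS hpt /= -leqNgt => hs.
    have hZ : ZL t.+1 <= bP.
      by rewrite /ZL /bP /=; apply: sum_le_in => i _; rewrite /wb; lia.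
    have := hfail t.+1; rewrite ltnS hpt htk' => /(_ isT).
    have := Lc_mono Lv S hs; rewrite -/(ZL t.+1) -/(ZH t.+1); lia.
  have ht : t = k by apply/eqP; rewrite eqn_leq htk htk'.
  have hab : aP + bP = size S.
    rewrite -hsum /aP /bP ht -big_split /=; apply: sum_eq_in => i _.
    by rewrite /wa /wb; lia.
  lia.
lia.
Qed.

End H.
Section Pass.
Variables (T : eqType) (Lv : T) (k c : nat).

Lemma Hpass q (S : seq T) g0 t :
  (forall i j, i <= j < k -> nth 0 q i <= nth 0 q j) ->
  0 < g0 -> g0 < t <= k -> c < nth 0 q g0.-1 -> nth 0 q g0.-1 < nth 0 q g0 ->
  let v := nth 0 q g0.-1 in
  let ZL := \sum_(0 <= i < t.-1) minn (nth 0 q i) v in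
  let ZH := \sum_(g0 <= i < t) (nth 0 q i - v) in
  ZL <= Lc Lv S (ZL + ZH) -> \sum_(0 <= i < k) nth 0 q i = size S ->
  \sum_(0 <= i < g0) wa c q i <= V Lv k c q S.
Proof.
move=> hsort g00 /andP[hgt htk] hcv hvw v ZL ZH hpass hsum.
set As := \sum_(0 <= i < g0) wa c q i.
have g0k : g0 < k by apply: leq_trans hgt htk.
have exP : exists i, c < nth 0 q i by exists g0.-1.
case: (ex_minnP exP) => p hcp hpmin.
have hpg : p <= g0.-1 by apply: hpmin.
have hlow : forall i, i < p -> nth 0 q i <= c.
  by move=> i hi; rewrite leqNgt; apply/negP => /hpmin; rewrite leqNgt hi.
have hhigh : forall i, p <= i < k -> c < nth 0 q i.
  by move=> i /andP[h1 h2]; apply: leq_trans hcp (hsort _ _ _); rewrite h1 h2.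
have hpk : p <= k by apply: leq_trans (ltnW g0k); rewrite (leq_trans hpg) // leq_pred.
have hpg0 : p <= g0 by rewrite (leq_trans hpg) // leq_pred.
have hg0t1 : g0 <= t.-1 by rewrite -ltnS prednK // (leq_ltn_trans _ hgt).
set U := \sum_(0 <= i < p) nth 0 q i.
set Y := \sum_(p <= i < g0) nth 0 q i.
set Z := \sum_(g0 <= i < t) nth 0 q i.
have f1 : ZL = U + Y + (t.-1 - g0) * v.
  rewrite /ZL (@sum_split 0 g0 t.-1) ?hg0t1 // (@sum_split 0 p g0) ?hpg0 //.
  rewrite -sum_nat_const_nat; congr (_ + _ + _); apply: sum_eq_in => i /andP[h1 h2].
  - have : nth 0 q i <= v by apply: hsort; apply/andP; split; lia.
    by move=> h; apply/minn_idPl.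
  - have : nth 0 q i <= v by apply: hsort; apply/andP; split; lia.
    by move=> h; apply/minn_idPl.
  - have : v < nth 0 q i.
      apply: leq_trans hvw (hsort _ _ _); rewrite h1 (leq_trans h2) //.
      by rewrite (leq_trans (leq_pred _) htk).
    by move=> h; apply/minn_idPr/ltnW.
have f2 : ZH + (t - g0) * v = Z.
  rewrite /ZH /Z -sum_nat_const_nat -big_split /=; apply: sum_eq_in => i /andP[h1 h2].
  have : v < nth 0 q i by apply: leq_trans hvw (hsort _ _ _); rewrite h1 (leq_trans h2).
  lia.
have f3 : As + (g0 - p) * c = Y.
  rewrite /As (@sum_split 0 p g0) ?hpg0 //.
  have -> : \sum_(0 <= i < p) wa c q i = 0.
    rewrite big_nat_cond big1 // => i /andP[/andP[_ hi] _].
    by rewrite /wa; apply/eqP; rewrite subn_eq0 hlow.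
  rewrite add0n /Y -sum_nat_const_nat -big_split /=; apply: sum_eq_in => i /andP[h1 h2].
  have := hhigh i; rewrite h1 (leq_trans h2 (ltnW g0k)) => /(_ isT); rewrite /wa; lia.
have hW : ZL + ZH <= size S.
  have e1 : \sum_(0 <= i < k) nth 0 q i = U + Y + Z + \sum_(t <= i < k) nth 0 q i.
    rewrite (@sum_split 0 t k) ?htk ?(leq_trans hpg0 (ltnW hgt)) //.
    rewrite (@sum_split 0 g0 t) ?(ltnW hgt) // (@sum_split 0 p g0) ?hpg0 //.
  have e2 : (t.-1 - g0) * v <= (t - g0) * v by apply: leq_mul => //; lia.
  rewrite -hsum e1; clear -f1 f2 e2; lia.
have hV := V_ge Lv k c q hW.
suff : F k c q (ZL + ZH) + As <= ZL by lia.
have [P ->] := F_att k c q (ZL + ZH).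
set At := \sum_(0 <= i < t) wa c q i.
have f4 : At + (t - g0) * c = As + Z.
  rewrite /At (@sum_split 0 g0 t) ?(ltnW hgt) // -addnA; congr (_ + _).
  rewrite /Z -sum_nat_const_nat -big_split /=; apply: sum_eq_in => i /andP[h1 h2].
  have := hhigh i; rewrite (leq_trans hpg0 h1) (leq_trans h2 htk) => /(_ isT); rewrite /wa; lia.
set j := \sum_(p <= i < k) (P i : nat).
have f5 : sB k c q P <= U + c * j.
  rewrite /sB (@sum_split 0 p k) ?hpk // /j big_distrr /=; apply: leq_add.
    by apply: sum_le_in => i /andP[_ hi]; rewrite /wb; case: (P i); lia.
  apply: sum_le_in => i /andP[_ hi]; rewrite /wb; case: (P i); lia.
set th := wa c q t.-1.
have hsA : \sum_(p <= i < k) (P i * wa c q i) <= sA k c q P.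
  by rewrite /sA (@sum_split 0 p k) ?hpk // leq_addl.
have f6 : At + th * j <= \sum_(p <= i < k) (P i * wa c q i) + th * (t - p).
  have eAt : At = \sum_(p <= i < k) ((i < t) * wa c q i).
    rewrite sum_cut; last by rewrite (leq_trans hpg0 (ltnW hgt)) htk.
    rewrite /At (@sum_split 0 p t) ?(leq_trans hpg0 (ltnW hgt)) //.
    have -> : \sum_(0 <= i < p) wa c q i = 0.
      rewrite big_nat_cond big1 // => i /andP[/andP[_ hi] _].
      by rewrite /wa; apply/eqP; rewrite subn_eq0 hlow.
    by rewrite add0n.
  have etp : t - p = \sum_(p <= i < k) ((i < t) * 1).
    by rewrite sum_cut ?(leq_trans hpg0 (ltnW hgt)) ?htk // sum_nat_const_nat muln1.
  rewrite eAt etp /j !big_distrr -!big_split /=; apply: sum_le_in => i /andP[h1 h2].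
  have ht1 : t.-1 < k by rewrite prednK ?(leq_trans _ hgt) // (leq_trans _ htk).
  case: (ltnP i t) => hit /=.
    have : nth 0 q i <= nth 0 q t.-1 by apply: hsort; apply/andP; split; lia.
    by rewrite /th /wa; case: (P i); lia.
  have : nth 0 q t.-1 <= nth 0 q i by apply: hsort; apply/andP; split; lia.
  by rewrite /th /wa; case: (P i); lia.
have hvc : c <= v by apply: ltnW.
have p1 : (t.-1 - g0) * c <= (t.-1 - g0) * v by apply: leq_mul.
have p2 : (t - g0) * c <= (t - g0) * v by apply: leq_mul.
have nia1 : c * (t.-1 - p) = (g0 - p) * c + (t.-1 - g0) * c.
  by rewrite -mulnDl mulnC; congr (_ * _); lia.
rewrite /G.
case: (leqP j (t.-1 - p)) => hj.
  have p3 : c * j <= c * (t.-1 - p) by apply: leq_mul.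
  lia.
have p4 : th * (t - p) <= th * j by apply: leq_mul => //; lia.
have hAt : At <= sA k c q P.
  apply: leq_trans hsA; rewrite -(leq_add2r (th * j)); apply: leq_trans f6 _.
  by rewrite leq_add2l.
have hAsZL : As <= ZL.
  by rewrite f1 -f3; apply: (leq_trans _ (leq_addr _ _)); rewrite addnCA leq_addr.
clear -hAt f4 f2 p2 hAsZL.
move: hAt f4 f2 p2; generalize ((t - g0) * c) ((t - g0) * v) => X Y.
lia.
Qed.
End Pass.
Import Order.TTheory GRing.Theory Num.Theory.
Lemma hfr (P : pred nat) n : has P (iota 1 n) ->
  let g := head 0 [seq x <- rev (iota 1 n) | P x] in
  [/\ 0 < g <= n, P g & forall x, g < x <= n -> ~~ P x].
Proof.
elim: n => [//|n IH].
rewrite -[n.+1]addn1 iotaD add1n rev_cat /= has_cat /= orbF addn1.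
case hP: (P n.+1) => /=.
  move=> _; by split; rewrite ?leqnn // => x /andP[h1 h2]; move: (leq_trans h1 h2); rewrite ltnn.
rewrite orbF => hh.
have [/andP[g0 gn] Pg hmax] := IH hh; split => //; first by rewrite g0 (leq_trans gn).
move=> x /andP[h1 h2]; case: (ltngtP x n.+1) => hx.
- by apply: hmax; rewrite h1 -ltnS.
- by move: h2; rewrite leqNgt hx.
- by rewrite hx hP.
Qed.

Lemma mgetS ms i : mget ms i.+1 = nth 0 ms i.
Proof. by []. Qed.

Lemma ZL_eq ms g h : ZL ms g h = \sum_(0 <= i < h.-1) minn (nth 0 ms i) (mget ms g.-1).
Proof. by rewrite /ZL big_add1. Qed.

Lemma ZH_eq ms g0 h : ZH ms g0.+1 h = \sum_(g0 <= i < h) (nth 0 ms i - mget ms g0).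
Proof. by rewrite /ZH big_add1. Qed.

Section TAR.
Variables (R : realDomainType) (H L : R).
Hypotheses (H0 : (0 <= H)%R) (HL : (H < L)%R).

Definition HLs (S : seq R) := all (fun s => (s == H) || (s == L)) S.

Lemma nth_HL (S : seq R) i : HLs S -> [\/ nth 0%R S i = H, nth 0%R S i = L | nth 0%R S i = 0%R].
Proof.
move=> hS; case: (ltnP i (size S)) => hi; last by rewrite nth_default //; constructor 3.
by move/allP: hS => /(_ _ (mem_nth 0%R hi)) /orP[/eqP->|/eqP->]; [constructor 1|constructor 2].
Qed.

Lemma cnt_iota (p : pred R) (S : seq R) z : ~~ p 0%R ->
  count (fun j => p (nth 0%R S j)) (iota 0 z) = count p (take z S).
Proof.
move=> p0; elim: S z => [|y S IH] z.
  rewrite /= (eq_count (a2 := pred0)) ?count_pred0 // => j /=.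
  by rewrite nth_nil (negbTE p0).
case: z => [//|z]; rewrite /= -IH -[in iota 1 z](addn0 1) iotaDl count_map.
by congr (_ + _); apply: eq_count => j.
Qed.

Lemma cnt_shift (S : seq R) z :
  cnt_greater S z = count (fun j => (sget S 1 < nth 0%R S j)%R) (iota 0 z).
Proof.
rewrite /cnt_greater -(addn0 1) iotaDl count_map; apply: eq_count => j /=.
by rewrite /sget add1n.
Qed.

Lemma cnt_L (S : seq R) z : HLs (L :: S) -> cnt_greater (L :: S) z = 0.
Proof.
move=> hS; rewrite cnt_shift /sget /= cnt_iota; last by rewrite -leNgt; apply/ltW/(le_lt_trans H0).
rewrite (eq_in_count (a2 := pred0)) ?count_pred0 // => x /mem_take hx /=.
move/allP: hS => /(_ _ hx) /orP[/eqP->|/eqP->]; last by rewrite ltxx.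
by rewrite ltNge ltW.
Qed.

Lemma cnt_H (S : seq R) z : HLs (H :: S) ->
  cnt_greater (H :: S) z = Lc L (H :: S) z.
Proof.
move=> hS; rewrite cnt_shift /sget /= cnt_iota; last by rewrite -leNgt.
apply: eq_in_count => x /mem_take hx /=.
move/allP: hS => /(_ _ hx) /orP[/eqP->|/eqP->]; last by rewrite HL eqxx.
by rewrite ltxx (lt_eqF HL).
Qed.
End TAR.
Lemma sum_ge_term (w : nat -> nat) n j : j < n -> w j <= \sum_(0 <= i < n) w i.
Proof.
move=> hj; rewrite (@sum_split 0 j n) ?(ltnW hj) // [X in _ + X]big_ltn //.
by rewrite addnCA leq_addr.
Qed.

Section Srt.
Variable k : nat.
Definition srt (q : seq nat) := forall i j, i <= j < k -> nth 0 q i <= nth 0 q j.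

Lemma srt_decr q g0 : srt q -> g0 < k -> mget q g0 < nth 0 q g0 -> srt (decr q g0.+1).
Proof.
move=> hs hg hw i j /andP[hij hjk]; rewrite !nth_decrS.
have hqij : nth 0 q i <= nth 0 q j by apply: hs; rewrite hij hjk.
case: (i =P g0) => [ei|ni]; case: (j =P g0) => [ej|nj] /=; try lia.
have hi : i < g0 by lia.
move: hw; clear ni; case: g0 hi hg ej => [//|g1] hi hg ej /= hw.
have : nth 0 q i <= nth 0 q g1 by apply: hs; rewrite -ltnS hi (ltnW hg).
subst j; lia.
Qed.

Lemma sum_decr q g0 : g0 < k -> 0 < nth 0 q g0 ->
  \sum_(0 <= i < k) nth 0 (decr q g0.+1) i + 1 = \sum_(0 <= i < k) nth 0 q i.
Proof.
move=> hg hp; rewrite -(sum_ind (fun _ => 1) hg) -big_split /=.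
apply: sum_eq_in => i _; rewrite nth_decrS; case: (i =P g0) => [->|] /=; lia.
Qed.

End Srt.

Section Step.
Variables (R : realDomainType) (H L : R).
Hypotheses (H0 : (0 <= H)%R) (HL : (H < L)%R).
Variable k : nat.

Lemma TA1 q (S : seq R) : size q = k -> srt k q -> 0 < \sum_(0 <= i < k) nth 0 q i ->
  let g := TA q S in
  [/\ 0 < g <= k, TA_gamma_ok q S g & forall x, g < x <= k -> ~~ TA_gamma_ok q S x].
Proof.
move=> hsz hs hpos; rewrite /TA hsz; apply: hfr.
have exP : exists i, (i < k) && (0 < nth 0 q i).
  case: (boolP [exists i : 'I_k, 0 < nth 0 q i]) => [/existsP[i hi]|hn].
    by exists i; rewrite ltn_ord hi.
  move: hpos; rewrite big_nat_cond big1 // => i /andP[/andP[_ hi] _].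
  apply/eqP; rewrite eqn0Ngt; apply/negP => hp; move/existsP: hn; apply.
  by exists (Ordinal hi).
case: (ex_minnP exP) => i0 /andP[hi0 hp0] hmin.
have hm0 : mget q i0 = 0.
  case: i0 hi0 hp0 hmin => [//|i1] hi0 hp0 hmin /=.
  apply/eqP; rewrite eqn0Ngt; apply/negP => hp.
  have := hmin i1; rewrite hp (ltn_trans _ hi0) // => /(_ isT); by rewrite ltnn.
apply/seq.hasP; exists i0.+1; first by rewrite mem_iota /= add1n ltnS hi0.
rewrite /TA_gamma_ok hm0 -lt0n hp0 /=.
apply/orP; left.
by rewrite /TA_test ZL_eq /= hm0 big_nat_cond big1 // => i _; rewrite minn0.
Qed.

Lemma step c q x (S' : seq R) : size q = k -> srt k q ->
  \sum_(0 <= i < k) nth 0 q i = size (x :: S') -> HLs H L (x :: S') ->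
  ((x == L) && (c < nth 0 q (TA q (x :: S')).-1))
    + V L k c (decr q (TA q (x :: S'))) S' <= V L k c q (x :: S').
Proof.
move=> hsz hs hsum hHL.
have hpos : 0 < \sum_(0 <= i < k) nth 0 q i by rewrite hsum.
have [/andP[g0p gk] okg hmax] := TA1 (x :: S') hsz hs hpos.
move: g0p gk okg hmax; case: (TA q (x :: S')) => [//|g0] _ g0k okg hmax /=.
have hmon : forall i, g0 <= i < k -> nth 0 q g0 <= nth 0 q i.
  by move=> i /andP[h1 h2]; apply: hs; rewrite h1 h2.
move/andP: okg => [hne okh].
have hw : mget q g0 < nth 0 q g0.
  rewrite ltn_neqAle eq_sym hne /=.
  case: (g0) g0k => [//|g1] g0k /=; apply: hs; rewrite leqnSn.
  by rewrite g0k.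
set S := x :: S'.
case hxL: (x == L).
-
  move/eqP: hxL => hxL; subst x.
  have hz : forall i, i < g0 -> nth 0 q i = 0.
    case/seq.hasP: okh => h hh; rewrite /TA_test (cnt_L H0 HL) // leqn0 ZL_eq /= => /eqP hZ.
    move: hh hmon hw hne g0k; case: (g0) hZ => [//|g1] hZ hh hmon hw hne g0k i hi.
    move: hh; rewrite mem_iota => /andP[hh1 _].
    have := sum_ge_term (fun i => minn (nth 0 q i) (nth 0 q g1)) (j := g1) (n := h.-1).
    rewrite hZ minnn; have -> : g1 < h.-1 by lia.
    move=> /(_ isT); rewrite leqn0 => /eqP h0.
    have : nth 0 q i <= nth 0 q g1.
      by apply: hs; apply/andP; split; lia.
    by rewrite h0 leqn0 => /eqP.
  rewrite /=.
  case: (leqP (nth 0 q g0) c) => hc /=.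
    by rewrite add0n; apply: VBL1.
  rewrite add1n; apply: VBL2 => s.
  have [P ->] := F_att k c q s.+1.
  case: (boolP [exists i : 'I_k, (g0 <= i) && P i]) => [/existsP[i /andP[h1 h2]]|hn].
    have hi : g0 <= i < k by rewrite h1 ltn_ord.
    exact: (FS s g0k hc hmon (ex_intro2 _ _ (nat_of_ord i) hi h2)).
  rewrite /G; have -> : sB k c q P = 0.
    rewrite /sB big_nat_cond big1 // => i /andP[/andP[_ hi] _].
    case: (ltnP i g0) => hig; first by rewrite /wb hz // min0n muln0.
    case hPi: (P i) => //=; move/existsP: hn; case; by exists (Ordinal hi); rewrite /= hig hPi.
  by rewrite minn0.
-
  have hxH : x = H.
    by move/andP: hHL => [/orP[/eqP //|hx] _]; rewrite hx in hxL.
  subst x.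
  rewrite /= add0n; apply: V_le => s hs'.
  have hSz : s.+1 <= size S by [].
  have hLcS : Lc L S s.+1 = Lc L S' s by rewrite /S Lc_cons hxL add0n.
  case: (leqP (nth 0 q g0) c) => hc.
  + set p := find (fun y => c < y) q.
    have hpk : p <= k by rewrite -hsz find_size.
    have hlow : forall i, i < p -> nth 0 q i <= c.
      by move=> i hi; have := before_find 0 hi => /= /negbT; rewrite -leqNgt.
    have hgp : g0 < p.
      rewrite ltnNge; apply/negP => hpg.
      have hpk' : p < size q by rewrite hsz (leq_ltn_trans hpg g0k).
      have hh : has (fun y => c < y) q by rewrite has_find.
      have := nth_find 0 hh; rewrite -/p => hcp.
      have : nth 0 q p <= nth 0 q g0 by apply: hs; rewrite hpg g0k.
      lia.
    have hLs : forall s, 0 < s -> Lc L S s < s.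
      by case=> [//|s0] _; rewrite /S Lc_cons hxL add0n ltnS Lc_le.
    have hfail : forall t, p < t <= k ->
      Lc L S (\sum_(0 <= i < t.-1) minn (nth 0 q i) (nth 0 q p.-1)
              + \sum_(p <= i < t) (nth 0 q i - nth 0 q p.-1))
      < \sum_(0 <= i < t.-1) minn (nth 0 q i) (nth 0 q p.-1).
      move=> t /andP[hpt htk].
      have hpk' : p < size q by rewrite hsz (leq_trans hpt htk).
      have hh : has (fun y => c < y) q by rewrite has_find.
      have hcp := nth_find 0 hh; rewrite -/p in hcp.
      have := hmax p.+1; rewrite ltnS hgp (leq_ltn_trans _ (leq_trans hpt htk)) //.
      move=> /(_ isT); rewrite /TA_gamma_ok negb_and negbK.
      move: hcp hlow hgp hpt; case: (p) => [//|p1] hcp hlow hgp hpt.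
      have hlp : nth 0 q p1 <= c by apply: hlow.
      rewrite (_ : (nth 0 q p1.+1 == nth 0 q p1) = false) ?orFb; last first.
        by apply/negbTE; rewrite neq_ltn (leq_ltn_trans hlp hcp) orbT.
      move/seq.hasPn => /(_ t); rewrite mem_iota hpt /=.
      have -> : t < p1.+2 + (size q - p1.+2).+1 by rewrite hsz; lia.
      by move=> /(_ isT); rewrite /TA_test -ltnNge (cnt_H H0 HL) // ZL_eq ZH_eq.
    have hp : 0 < p <= k by apply/andP; split; lia.
    have hHi := Hi hp hlow hsum hLs hfail.
    have := hHi s.+1 hSz; rewrite hLcS; have := FC k c q g0 s; lia.
  + have hAs : \sum_(0 <= i < g0) wa c q i <= V L k c q S.
      move: hw hmon hc okh hne; case: (g0) g0k => [|g1] g0k hw hmon hc okh hne.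
        by rewrite big_geq.
      case: (leqP (nth 0 q g1) c) => hv.
        rewrite big_nat_cond big1 // => i /andP[/andP[_ hi] _].
        rewrite /wa; apply/eqP; rewrite subn_eq0 (leq_trans _ hv) //.
        by apply: hs; rewrite -ltnS hi (ltn_trans _ g0k).
      case/seq.hasP: okh => h; rewrite mem_iota => /andP[hh1 hh2].
      rewrite /TA_test (cnt_H H0 HL) // ZL_eq ZH_eq /= => hpass.
      apply: (Hpass (t := h)) => //.
      by rewrite hh1 -ltnS (leq_trans hh2) // -hsz; lia.
    have := HB2 (Lv := L) S' s g0k hc hmon (negbT hxL) hAs.
    rewrite -/S => h1; apply: leq_trans h1 _; rewrite geq_max leqnn andbT.
    exact: V_ge.
Qed.

End Step.
Fixpoint levels (q : seq nat) (y : seq nat) : seq nat :=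
  if y is r :: y' then nth 0 q r.-1 :: levels (decr q r) y' else [::].

Section VF.
Variable k : nat.
Definition vf q (y : seq nat) :=
  (forall r, r \in y -> 0 < r <= k) /\ (forall i, i < k -> count_mem i.+1 y = nth 0 q i).

Lemma vf_cons q r y : vf q (r :: y) ->
  [/\ 0 < r <= k, 0 < nth 0 q r.-1 & vf (decr q r) y].
Proof.
move=> [h1 h2]; have hr := h1 r (mem_head _ _).
have hr1 : r.-1 < k by case/andP: hr; case: (r) => // r' _; rewrite ltnS.
split => //.
  by rewrite -h2 //= prednK ?eqxx //; case/andP: hr.
split; first by move=> r' hr'; apply: h1; rewrite in_cons hr' orbT.
move=> i hi; rewrite nth_decr -h2 //= eq_sym; lia.
Qed.

End VF.

Section Main.
Variables (R : realDomainType) (H L : R).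
Hypotheses (H0 : (0 <= H)%R) (HL : (H < L)%R).
Variable k : nat.

Definition Acnt c q (S : seq R) y :=
  \sum_(0 <= t < size S) ((nth 0%R S t == L) && (c < nth 0 (levels q y) t)).

Lemma Acnt_cons c q x S r y :
  Acnt c q (x :: S) (r :: y) = ((x == L) && (c < nth 0 q r.-1)) + Acnt c (decr q r) S y.
Proof. by rewrite /Acnt /= big_nat_recl. Qed.

Lemma lower c q S y : size y = size S -> vf k q y -> V L k c q S <= Acnt c q S y.
Proof.
elim: S q y => [|x S IH] q [|r y] //=.
  by move=> _ _; rewrite V_nil.
move=> [hs] /vf_cons [hr hp hv].
rewrite Acnt_cons.
have hr1 : r.-1 < k by case/andP: hr; case: (r) => // r' _; rewrite ltnS.
have := VA L c x S hr1 hp; rewrite prednK; last by case/andP: hr.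
move=> h; apply: leq_trans h _; rewrite leq_add2l; exact: IH.
Qed.

Lemma TA2 q (S : seq R) : size q = k -> srt k q -> 0 < \sum_(0 <= i < k) nth 0 q i ->
  exists g0, [/\ TA q S = g0.+1, g0 < k & mget q g0 < nth 0 q g0].
Proof.
move=> hsz hs hpos.
have [/andP[g0p gk] okg _] := TA1 S hsz hs hpos.
move: g0p gk okg; case: (TA q S) => [//|g0] _ g0k okg.
exists g0; split => //.
move/andP: okg => [hne _].
rewrite ltn_neqAle eq_sym hne /=.
case: (g0) g0k => [//|g1] g0k /=; apply: hs; rewrite leqnSn.
by rewrite g0k.
Qed.

Lemma upper c q S : size q = k -> srt k q -> \sum_(0 <= i < k) nth 0 q i = size S ->
  HLs H L S -> Acnt c q S (alg1_aux q S) <= V L k c q S.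
Proof.
elim: S q => [|x S IH] q hsz hs hsum hHL; first by rewrite /Acnt big_geq.
have hpos : 0 < \sum_(0 <= i < k) nth 0 q i by rewrite hsum.
have [g0 [eg g0k hw]] := TA2 (x :: S) hsz hs hpos.
rewrite /= Acnt_cons.
have := step H0 HL c hsz hs hsum hHL.
move=> h; apply: leq_trans _ h; rewrite leq_add2l.
rewrite eg; apply: IH.
- by rewrite size_decr hsz.
- exact: (srt_decr hs g0k hw).
- have := sum_decr (q := q) g0k (leq_ltn_trans (leq0n _) hw); rewrite hsum /=; lia.
- by case/andP: hHL.
Qed.

Lemma alg_vf q (S : seq R) : size q = k -> srt k q -> \sum_(0 <= i < k) nth 0 q i = size S ->
  size (alg1_aux q S) = size S /\ vf k q (alg1_aux q S).
Proof.
elim: S q => [|x S IH] q hsz hs hsum.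
  split => //; split => // i hi /=.
  have := sum_ge_term (fun i => nth 0 q i) hi; rewrite hsum /=; lia.
have hpos : 0 < \sum_(0 <= i < k) nth 0 q i by rewrite hsum.
have [g0 [eg g0k hw]] := TA2 (x :: S) hsz hs hpos.
have hp : 0 < nth 0 q g0 by apply: leq_ltn_trans hw.
have h1 : size (decr q g0.+1) = k by rewrite size_decr hsz.
have h3 : \sum_(0 <= i < k) nth 0 (decr q g0.+1) i = size S.
  by have := sum_decr (q := q) g0k hp; rewrite hsum /=; lia.
have [hsz' [hv1 hv2]] := IH (decr q g0.+1) h1 (srt_decr hs g0k hw) h3.
rewrite /= eg; split; first by rewrite hsz'.
split.
  by move=> r; rewrite in_cons => /orP[/eqP->|/hv1] //; rewrite ltnS.
move=> i hi /=; rewrite hv2 // nth_decrS.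
case: (i =P g0) => [->|ne]; rewrite ?eqxx /=; first by lia.
rewrite eqSS; case: (g0 =P i) => [e|_]; [by case: ne|lia].
Qed.

End Main.
Lemma size_levels q y : size (levels q y) = size y.
Proof. by elim: y q => [|r y IH] q //=; rewrite IH. Qed.

Lemma nth_levels q y t : (forall r, r \in y -> 0 < r) -> t < size y ->
  nth 0 (levels q y) t = nth 0 q (nth 0 y t).-1 - count_mem (nth 0 y t) (take t y).
Proof.
elim: y q t => [|r y IH] q t hpos //= ht.
case: t ht => [|t] ht /=; first by rewrite subn0.
rewrite IH //; last by move=> r' hr'; apply: hpos; rewrite in_cons hr' orbT.
have hy : 0 < nth 0 y t by apply: hpos; rewrite in_cons mem_nth ?orbT.
rewrite nth_decr prednK // subnDA; congr (_ - _ - _).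
by rewrite eq_sym.
Qed.

Section Cost.
Variable (g : nat -> nat) (k : nat).

Definition SigQ q := \sum_(0 <= i < k) \sum_(0 <= l < nth 0 q i) g l.+1.

Lemma sum_all q y : vf k q y ->
  \sum_(0 <= t < size y) g (nth 0 (levels q y) t) = SigQ q.
Proof.
elim: y q => [|r y IH] q hv.
  rewrite big_geq // /SigQ big_nat_cond big1 // => i /andP[/andP[_ hi] _].
  by case: hv => _ /(_ i hi) /= <-; rewrite big_geq.
have [hr hp hv'] := vf_cons hv.
rewrite /= big_nat_recl //= IH //.
have hr1 : r.-1 < k by case/andP: hr; case: (r) => // r' _; rewrite ltnS.
rewrite /SigQ -(sum_ind (fun i => g (nth 0 q i)) hr1) -big_split /=.
apply: sum_eq_in => i _; rewrite nth_decr.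
case: (i =P r.-1) => [->|ne].
  rewrite prednK ?eqxx; last by case/andP: hr.
  rewrite mul1n -{3}(prednK hp) big_nat_recr //= addnC subn1.
  by rewrite prednK.
rewrite (_ : (i.+1 == r) = false) ?subn0 ?mul0n ?add0n //.
apply/negbTE/eqP => e; apply: ne; by rewrite -e.
Qed.

End Cost.

Section Cost2.
Variable (g : nat -> nat).
Hypothesis gmono : forall a b, a <= b -> g a <= g b.

Lemma tel l M : l <= M -> g l = g 0 + \sum_(0 <= c < M) ((c < l) * (g c.+1 - g c)).
Proof.
move=> hl; rewrite sum_cut ?hl // telescope_sumn; last by move=> a b; apply: gmono.
by rewrite subnKC // gmono.
Qed.

Lemma Lsum (R : realDomainType) (L : R) (T : seq R) q y M :
  (forall t, t < size T -> nth 0 (levels q y) t <= M) ->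
  \sum_(0 <= t < size T) ((nth 0%R T t == L) * g (nth 0 (levels q y) t))
  = g 0 * \sum_(0 <= t < size T) (nth 0%R T t == L)
    + \sum_(0 <= c < M) (g c.+1 - g c) * Acnt L c q T y.
Proof.
move=> hM.
have e : forall t, t < size T ->
  (nth 0%R T t == L) * g (nth 0 (levels q y) t) =
  g 0 * (nth 0%R T t == L) + \sum_(0 <= c < M) (g c.+1 - g c) *
      ((nth 0%R T t == L) && (c < nth 0 (levels q y) t)).
  move=> t ht; rewrite (tel (hM t ht)) mulnDr mulnC; congr (_ + _).
  rewrite big_distrr /=; apply: sum_eq_in => c _.
  by case: (nth 0%R T t == L); case: (c < _); rewrite /= ?muln0 ?muln1 ?mul0n ?mul1n.
rewrite (sum_eq_in (w2 := fun t => g 0 * (nth 0%R T t == L) + \sum_(0 <= c < M) (g c.+1 - g c) *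
      ((nth 0%R T t == L) && (c < nth 0 (levels q y) t)))); last first.
  by move=> t /andP[_ ht]; apply: e.
rewrite big_split /= big_distrr /=; congr (_ + _).
rewrite exchange_big_nat /=; apply: sum_eq_in => c _.
by rewrite /Acnt big_distrr.
Qed.
End Cost2.

Lemma cost_split (R : realDomainType) (H L : R) (T : seq R) (Fn : nat -> nat) :
  (H < L)%R -> HLs H L T ->
  (\sum_(0 <= t < size T) (Fn t)%:R * nth 0%R T t)%R =
  ((\sum_(0 <= t < size T) Fn t)%:R * H
   + (\sum_(0 <= t < size T) ((nth 0%R T t == L) * Fn t))%:R * (L - H))%R.
Proof.
move=> HL hT; rewrite !natr_sum !mulr_suml -big_split /=.
apply: eq_big_nat => t /andP[_ ht].
move/allP: hT => /(_ _ (mem_nth 0%R ht)) /orP[/eqP->|/eqP->].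
  by rewrite (lt_eqF HL) /= mul0n mul0r addr0.
by rewrite eqxx mul1n mulrBr addrC subrK.
Qed.

Theorem theorem2_aux (R : realDomainType) (k m : nat) (f : nat -> nat)
    (H L : R) (T : seq R) :
  (0 < k)%N -> (0 < m)%N ->
  (forall a b : nat, (a <= b)%N -> (f b <= f a)%N) ->
  (0 <= H)%R -> (H < L)%R ->
  size T = (k * m)%N ->
  all (fun s => (s == H) || (s == L)) T ->
  let x := algorithm1 (nseq k m) T in
  valid_scheme k m (k * m) x /\
  (forall y : seq nat, valid_scheme k m (k * m) y ->
     (total_cost f T x <= total_cost f T y)%R).
Proof.
move=> k0 m0 hf H0 HL hT hHL x.
set q0 := nseq k m.
have hsz0 : size q0 = k by rewrite size_nseq.
have hq0 : forall i, i < k -> nth 0 q0 i = m by move=> i hi; rewrite nth_nseq hi.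
have hs0 : srt k q0.
  by move=> i j /andP[hij hj]; rewrite !hq0 // (leq_ltn_trans hij hj).
have hsum0 : \sum_(0 <= i < k) nth 0 q0 i = size T.
  by rewrite hT (sum_eq_in (w2 := fun _ => m)) ?sum_nat_const_nat ?subn0 // => i /andP[_ /hq0].
have [hszx hvx] := alg_vf H0 HL hsz0 hs0 hsum0.
have vf_valid : forall z, valid_scheme k m (k * m) z -> vf k q0 z /\ size z = size T.
  move=> z /and3P[/eqP hz1 /allP hz2 /allP hz3]; split; last by rewrite hz1 hT.
  split; first by move=> r /hz2.
  move=> i hi; rewrite hq0 //; apply/eqP; apply: hz3.
  by rewrite mem_iota /= add1n ltnS hi.
split.
  apply/and3P; split; first by rewrite /x /algorithm1 hszx hT.
    by apply/allP => r /(proj1 hvx).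
  apply/allP => r; rewrite mem_iota => /andP[r1 r2].
  have hr : r.-1 < k by rewrite -ltnS prednK // -(addn1 k) addnC.
  by rewrite -{1}(prednK r1) (proj2 hvx _ hr) hq0.
move=> y hy; have [hvy hszy] := vf_valid y hy.
have [hvx' hszx'] : vf k q0 x /\ size x = size T by split => //.
pose g l := f (m.+1 - l).
have gmono : forall a b, a <= b -> g a <= g b by move=> a b hab; apply: hf; lia.
have hlev : forall z, vf k q0 z -> size z = size T -> forall t, t < size T ->
    nth 0 (levels q0 z) t <= m /\ f (position z t) = g (nth 0 (levels q0 z) t).
  move=> z [hz1 hz2] hsz t ht.
  have htz : t < size z by rewrite hsz.
  set a := nth 0 z t.
  have ha : 0 < a <= k by apply: hz1; rewrite mem_nth.
  have ha1 : a.-1 < k by rewrite -ltnS prednK; case/andP: ha.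
  rewrite nth_levels //; last by move=> r /hz1 /andP[].
  rewrite -/a hq0 //.
  have hcnt : count_mem a (take t.+1 z) <= m.
    rewrite -(hq0 _ ha1) -hz2 // prednK; last by case/andP: ha.
    by rewrite -{2}(cat_take_drop t.+1 z) count_cat leq_addr.
  have ep : position z t = (count_mem a (take t z)).+1.
    by rewrite /position (take_nth 0 htz) -cats1 count_cat /= eqxx addn1.
  have hcnt' : (count_mem a (take t z)).+1 <= m.
    by move: hcnt; rewrite (take_nth 0 htz) -cats1 count_cat /= eqxx addn1 => h; exact: h.
  split; first exact: leq_subr.
  rewrite ep /g; congr f; rewrite subSn ?leq_subr // subKn //; exact: ltnW hcnt'.
have ecost : forall z, vf k q0 z -> size z = size T ->
    total_cost f T z = (\sum_(0 <= t < size T) (g (nth 0 (levels q0 z) t))%:R * nth 0%R T t)%R.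
  move=> z hz hsz; apply: eq_big_nat => t /andP[_ ht].
  by rewrite (proj2 (hlev z hz hsz t ht)).
rewrite (ecost x hvx' hszx') (ecost y hvy hszy) !(cost_split _ HL hHL).
have eA : forall z, vf k q0 z -> size z = size T ->
    \sum_(0 <= t < size T) g (nth 0 (levels q0 z) t) = SigQ g k q0.
  by move=> z hz hsz; rewrite -hsz; apply: sum_all.
rewrite (eA x hvx' hszx') (eA y hvy hszy) lerD2l.
apply: ler_wpM2r; first by rewrite subr_ge0 ltW.
rewrite ler_nat.
rewrite (@Lsum g gmono _ L T q0 x m); last by move=> t ht; exact: (proj1 (hlev x hvx' hszx' t ht)).
rewrite (@Lsum g gmono _ L T q0 y m); last by move=> t ht; exact: (proj1 (hlev y hvy hszy t ht)).
rewrite leq_add2l; apply: sum_le_in => c _; apply: leq_mul => //.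
apply: leq_trans (upper H0 HL c hsz0 hs0 hsum0 hHL) _.
exact: lower.
Qed.

Unset Implicit Arguments. Set Strict Implicit. Set Printing Implicit Defensive.
Import Order.TTheory GRing.Theory Num.Theory.
Local Open Scope ring_scope.

Theorem theorem2 (R : realDomainType) (k m : nat) (f : nat -> nat)
    (H L : R) (T : seq R) :
  (0 < k)%N -> (0 < m)%N ->
  (forall a b : nat, (a <= b)%N -> (f b <= f a)%N) ->
  0 <= H -> H < L ->
  size T = (k * m)%N ->
  all (fun s => (s == H) || (s == L)) T ->
  let x := algorithm1 (nseq k m) T in
  valid_scheme k m (k * m) x /\
  (forall y : seq nat, valid_scheme k m (k * m) y ->
     total_cost f T x <= total_cost f T y).
Proof. exact: theorem2_aux. Qed.
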